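(* Let $\mathcal{N}$ be a cactus network. Then every nonempty set of vertices of $\mathcal{N}$ has a unique lowest common ancestor.
   Context: A cactus network is a finite directed acyclic graph $\mathcal{N}$ with a unique vertex of indegree $0$ (the root) such that in its underlying undirected graph $\mathcal{N}^\star$ every edge belongs to at most one simple cycle. For vertices $u,v$, $u\succcurlyeq v$ ($u$ is an ancestor of $v$) means there is a directed path from $u$ to $v$ (possibly of length $0$), and $u\succ v$ means $u\succcurlyeq v$ and $u\ne v$. A lowest common ancestor of a set $V$ of vertices is a vertex $u$ with $u\succcurlyeq v$ for all $v\in V$ such that there is no vertex $u'$ with $u\succ u'$ and $u'\succcurlyeq v$ for all $v\in V$. *)

(* Defs.v *)
From mathcomp Require Import all_boot.
Set Implicit Arguments. Unset Strict Implicit. Unset Printing Implicit Defensive.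

Section Cactus.
Variables (V : finType) (E : rel V).

Definition dag_acyclic : Prop := forall u v, E u v -> ~~ connect E v u.

Definition indeg0 (r : V) : bool := [forall u, ~~ E u r].

Definition uedge : rel V := fun x y => E x y || E y x.

Definition simple_ucycle (c : seq V) : bool :=
  [&& 2 < size c, uniq c & cycle uedge c].

Definition cycle_has_edge (c : seq V) (x y : V) : bool :=
  [&& x \in c, y \in c & (next c x == y) || (next c y == x)].

(* every edge of N* belongs to at most one simple cycle
   (two simple cycles are the same iff they have the same edge set) *)
Definition edge_in_at_most_one_cycle : Prop :=
  forall c1 c2 x y, simple_ucycle c1 -> simple_ucycle c2 ->
    uedge x y -> cycle_has_edge c1 x y -> cycle_has_edge c2 x y ->
    forall a b, cycle_has_edge c1 a b = cycle_has_edge c2 a b.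

Definition cactus_network : Prop :=
  [/\ dag_acyclic, (exists! r, indeg0 r) & edge_in_at_most_one_cycle].

Definition anc (u v : V) : bool := connect E u v.
Definition sanc (u v : V) : bool := anc u v && (u != v).

Definition common_anc (A : {set V}) (u : V) : Prop := forall v, v \in A -> anc u v.

Definition is_lca (A : {set V}) (u : V) : Prop :=
  common_anc A u /\ ~ (exists u', sanc u u' /\ common_anc A u').

End Cactus.

(* Main.v *)
Require Import Defs.
From mathcomp Require Import all_boot.

Set Implicit Arguments. Unset Strict Implicit. Unset Printing Implicit Defensive.

Section Aux.
Variables (V : finType) (E : rel V).
Hypothesis acyc : dag_acyclic E.

Local Notation anc := (anc E).

Lemma anc_refl x : anc x x.
Proof. exact: connect0. Qed.

Lemma anc_trans x y z : anc x y -> anc y z -> anc x z.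
Proof. exact: connect_trans. Qed.

Lemma anc_edge x y : E x y -> anc x y.
Proof. exact: connect1. Qed.

Lemma anc_antisym x y : anc x y -> anc y x -> x = y.
Proof.
move=> /connectP [[|w p] pth ->] //= Hyx.
case/andP: pth => Exw pw.
have := acyc Exw; rewrite (connect_trans _ Hyx) //.
by apply/connectP; exists p.
Qed.

Definition ancset x := [set w | anc w x].

Lemma sanc_card x y : anc x y -> x != y -> #|ancset x| < #|ancset y|.
Proof.
move=> Hxy nxy; apply: proper_card; apply/properP; split.
  by apply/subsetP => w; rewrite !inE => Hw; apply: anc_trans Hxy.
exists y; first by rewrite inE anc_refl.
rewrite inE; apply/negP => Hyx; move/negP: nxy; apply.
by rewrite (anc_antisym Hxy Hyx).
Qed.

Lemma exists_min (P : pred V) x0 : P x0 ->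
  exists x, P x /\ forall y, P y -> anc y x -> y = x.
Proof.
move=> Px0; case: (arg_minnP (fun x => #|ancset x|) Px0) => x Px Hmin.
exists x; split => // y Py Hyx; apply/eqP; apply/negPn/negP => nyx.
by have := Hmin y Py; rewrite leqNgt (sanc_card Hyx nyx).
Qed.

Lemma exists_max (P : pred V) x0 : P x0 ->
  exists x, P x /\ forall y, P y -> anc x y -> y = x.
Proof.
move=> Px0; case: (arg_maxnP (fun x => #|ancset x|) Px0) => x Px Hmax.
exists x; split => // y Py Hxy; apply/eqP; apply/negPn/negP => nyx.
have := Hmax y Py; rewrite /= leqNgt (sanc_card Hxy) //.
by rewrite eq_sym.
Qed.

Lemma root_reach r : indeg0 E r -> (forall r', indeg0 E r' -> r' = r) ->
  forall v, anc r v.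
Proof.
move=> _ Hr v.
have [w [Hwv Hmin]] := @exists_min (fun w => anc w v) v (anc_refl v).
suff -> : r = w by [].
symmetry; apply: Hr; apply/forallP => u; apply/negP => Euw.
have Huv : anc u v by apply: anc_trans (anc_edge Euw) Hwv.
have := Hmin u Huv (anc_edge Euw) => eu.
by move: (acyc Euw); rewrite eu connect0.
Qed.

Lemma path_anc x p w : path E x p -> w \in x :: p -> anc x w /\ anc w (last x p).
Proof.
move=> pth wp; split; first exact: (path_connect pth).
elim: p x pth wp => [|y p IH] x /=.
  by rewrite inE => _ /eqP ->; apply: anc_refl.
case/andP => Exy pth; rewrite inE => /orP [/eqP ->|wp].
  by apply: anc_trans (anc_edge Exy) _; apply: (path_connect pth); apply: mem_last.
exact: IH.
Qed.

Lemma short_path x y : anc x y ->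
  exists p, [/\ path E x p, uniq (x :: p) & last x p = y].
Proof.
move=> /connectP [p pth ->]; case: (shortenP pth) => p' pth' u _.
by exists p'.
Qed.


Lemma path_mem x p w : path E x p -> uniq (x :: p) -> w \in p ->
  [/\ anc x w, anc w (last x p) & w != x].
Proof.
move=> pth up wp; have [h1 h2] : anc x w /\ anc w (last x p).
  by apply: path_anc => //; rewrite inE wp orbT.
split => //; apply/eqP => ewx; move: up; rewrite /= -ewx wp.
by [].
Qed.

Lemma build_cycle z u1 u2 m y1 s1' s2 :
  ~~ anc u1 u2 -> ~~ anc u2 u1 ->
  (forall y, anc y u1 -> anc y u2 -> anc z y -> y = z) ->
  anc u1 m -> anc u2 m ->
  (forall y, anc u1 y -> anc u2 y -> anc y m -> y = m) ->
  path E z (y1 :: s1') -> uniq (z :: y1 :: s1') -> last z (y1 :: s1') = u1 ->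
  path E z s2 -> uniq (z :: s2) -> last z s2 = u2 ->
  exists c, [/\ simple_ucycle E c, cycle_has_edge c y1 z, m \in c &
     forall w, w \in c -> [|| anc w u1, anc w u2 | anc w m]].
Proof.
move=> n12 n21 zmax hu1m hu2m mmin ps1 us1 ls1 ps2 us2 ls2.
set s1 := y1 :: s1' in ps1 us1 ls1 *.
have [t1 [pt1 ut1 lt1]] := short_path hu1m.
have [t2 [pt2 ut2 lt2]] := short_path hu2m.
have F1 w : w \in s1 -> [/\ anc z w, anc w u1 & w != z].
  by move=> ws; have := path_mem ps1 us1 ws; rewrite ls1.
have F2 w : w \in s2 -> [/\ anc z w, anc w u2 & w != z].
  by move=> ws; have := path_mem ps2 us2 ws; rewrite ls2.
have T1 w : w \in t1 -> [/\ anc u1 w, anc w m & w != u1].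
  by move=> ws; have := path_mem pt1 ut1 ws; rewrite lt1.
have T2 w : w \in t2 -> [/\ anc u2 w, anc w m & w != u2].
  by move=> ws; have := path_mem pt2 ut2 ws; rewrite lt2.
have hzu1 : anc z u1 by have [] := path_anc ps1 (mem_head z s1); rewrite ls1.
have hzu2 : anc z u2 by have [] := path_anc ps2 (mem_head z s2); rewrite ls2.
have antis := anc_antisym.
have nm1 : m != u1.
  by apply/eqP => e; move/negP: n21; apply; rewrite -e.
have nmz : m != z.
  apply/eqP => e; move/negP: n12; apply; apply: anc_trans hzu2; by rewrite -e.
set q := s2 ++ t2.
have pq : path E z q by rewrite cat_path ps2 ls2 pt2.
have lq : last z q = m by rewrite last_cat ls2 lt2.
have uq : uniq (z :: q).
  rewrite /= mem_cat negb_or; move: us2 => /= /andP [-> us2] /=.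
  rewrite cat_uniq us2; move: ut2 => /= /andP [_ ->]; rewrite andbT.
  apply/andP; split.
    apply/negP => zt; have [h1 _ h3] := T2 _ zt.
    by move/eqP: h3; apply; apply: antis.
  apply/hasPn => w wt; apply/negP => ws.
  have [_ h2 _] := F2 _ ws; have [h1 _ h3] := T2 _ wt.
  by move/eqP: h3; apply; apply: antis.
set B := belast z q.
have uB : uniq B && (m \notin B).
  by move: uq; rewrite lastI lq rcons_uniq andbC.
case/andP: uB => uB mB.
have memB w : w \in B -> [/\ w != m & [\/ w = z, w \in s2 | w \in t2]].
  move=> wB; split; first by apply/eqP => e; move: mB; rewrite -e wB.
  move: (mem_belast wB); rewrite inE mem_cat => /orP [/eqP ->|/orP [h|h]].
  - by apply: Or31.
  - by apply: Or32.
  - by apply: Or33.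
have zB : z \in B.
  have : z \in rcons B m by rewrite -lq -lastI mem_head.
  by rewrite mem_rcons inE eq_sym (negbTE nmz).
set R := rev B.
have pR : path (uedge E) m R.
  rewrite /R /B -lq rev_path.
  by apply: sub_path pq => a b h; rewrite /uedge h orbT.
have lR : last m R = z.
  move: zB; rewrite /R /B; case: (q) => [|x q0] //= _.
  by rewrite rev_cons last_rcons.
set c := s1 ++ t1 ++ R.
have pc : path (uedge E) z c.
  rewrite /c !cat_path ls1 lt1 pR andbT.
  apply/andP; split; apply: sub_path; try eassumption;
    by move=> a b h; rewrite /uedge h.
have lc : last z c = z by rewrite /c !last_cat ls1 lt1 lR.
have uc : uniq c.
  rewrite /c cat_uniq cat_uniq rev_uniq uB andbT.
  move: us1 => /= /andP [_ ->]; move: ut1 => /= /andP [_ ->] /=.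
  rewrite has_cat negb_or -andbA; apply/and3P; split.
  - apply/hasPn => w wt; apply/negP => ws.
    have [_ h2 h3] := F1 _ ws; have [h1 _ h4] := T1 _ wt.
    by move/eqP: h4; apply; apply: antis.
  - apply/hasPn => w; rewrite mem_rev => wB; apply/negP => ws.
    have [h1 h2 h3] := F1 _ ws.
    have [_ [e|h|h]] := memB _ wB.
    + by move/eqP: h3.
    + have [_ h5 _] := F2 _ h; by move/eqP: h3; apply; apply: zmax.
    + have [h5 _ _] := T2 _ h; move/negP: n21; apply; exact: anc_trans h5 h2.
  - apply/hasPn => w; rewrite mem_rev => wB; apply/negP => wt.
    have [h1 h2 h3] := T1 _ wt.
    have [h4 [e|h|h]] := memB _ wB.
    + by move/negP: n12; apply; rewrite e in h1; exact: anc_trans h1 hzu2.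
    + have [_ h5 _] := F2 _ h; move/negP: n12; apply; exact: anc_trans h1 h5.
    + have [h5 h6 _] := T2 _ h; by move/eqP: h4; apply; apply: mmin.
have mt1 : m \in t1.
  have : m \in u1 :: t1 by rewrite -lt1 mem_last.
  by rewrite inE (negbTE nm1).
have cyc : cycle (uedge E) c.
  by rewrite (cycle_path z) /c /= -/c; move: lc pc; rewrite /c /= => ->.
exists c; split.
- rewrite /simple_ucycle uc cyc andbT /c !size_cat.
  have h1 : 0 < size t1 by case: (t1) mt1.
  have h2 : 0 < size R by rewrite size_rev; case: (B) zB.
  rewrite /= addSn ltnS andbT; exact: leq_trans (leq_add h1 h2) (leq_addl _ _).
- have zc : z \in c by rewrite /c !mem_cat mem_rev zB !orbT.
  rewrite /cycle_has_edge; apply/and3P; split => //.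
    by rewrite /c mem_cat mem_head.
  apply/orP; right; rewrite next_nth zc.
  have uc' : uniq (y1 :: (s1' ++ t1 ++ R)) := uc.
  have lc' : last y1 (s1' ++ t1 ++ R) = z := lc.
  change (nth y1 (s1' ++ t1 ++ R) (index z (y1 :: (s1' ++ t1 ++ R))) == y1).
  by rewrite -[X in index X _]lc' (index_last uc') nth_default.
- by rewrite /c !mem_cat mt1 orbT.
- move=> w; rewrite /c !mem_cat => /orP [ws|/orP [wt|wR]].
  + by have [_ -> _] := F1 _ ws.
  + by have [_ -> _] := T1 _ wt; rewrite !orbT.
  + rewrite mem_rev in wR; have [_ [e|h|h]] := memB _ wR.
    * by rewrite e hzu1.
    * by have [_ -> _] := F2 _ h; rewrite orbT.
    * by have [_ -> _] := T2 _ h; rewrite !orbT.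
Qed.

Lemma lca_uniq r (A : {set V}) u1 u2 :
  (forall v, anc r v) -> edge_in_at_most_one_cycle E -> A != set0 ->
  is_lca E A u1 -> is_lca E A u2 -> u1 = u2.
Proof.
move=> reach cact An0 [H1c H1m] [H2c H2m].
case: (eqVneq u1 u2) => // ne.
have n12 : ~~ anc u1 u2.
  apply/negP => h; apply: H1m; exists u2; split => //; by rewrite /sanc h ne.
have n21 : ~~ anc u2 u1.
  apply/negP => h; apply: H2m; exists u1; split => //; by rewrite /sanc h eq_sym ne.
have [z [/andP [hzu1 hzu2] zmax]] :=
  @exists_max (fun y => anc y u1 && anc y u2) r (introT andP (conj (reach u1) (reach u2))).
have zmax' y : anc y u1 -> anc y u2 -> anc z y -> y = z.
  by move=> h1 h2; apply: zmax; rewrite h1 h2.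
have [s1 [ps1 us1 ls1]] := short_path hzu1.
have [s2 [ps2 us2 ls2]] := short_path hzu2.
case: s1 ps1 us1 ls1 => [/= _ _ e|y1 s1' ps1 us1 ls1].
  by exfalso; move/negP: n12; apply; rewrite -e.
have Ezy1 : E z y1 by case/andP: ps1.
have getm a : a \in A -> exists m, [/\ anc u1 m, anc u2 m, anc m a &
    forall y, anc u1 y -> anc u2 y -> anc y m -> y = m].
  move=> aA.
  have [m [/and3P [h1 h2 h3] mmin]] :=
    @exists_min (fun m => [&& anc u1 m, anc u2 m & anc m a]) a
      (introT and3P (And3 (H1c a aA) (H2c a aA) (anc_refl a))).
  exists m; split => // y g1 g2 g3; apply: mmin => //.
  by rewrite g1 g2 (anc_trans g3 h3).
have cross c c' m m' : simple_ucycle E c -> simple_ucycle E c' ->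
    cycle_has_edge c y1 z -> cycle_has_edge c' y1 z -> m \in c ->
    anc u1 m -> anc u2 m ->
    (forall w, w \in c' -> [|| anc w u1, anc w u2 | anc w m']) -> anc m m'.
  move=> sc sc' ec ec' mc g1 g2 mem'.
  have ue : uedge E y1 z by rewrite /uedge Ezy1 orbT.
  have := cact c c' y1 z sc sc' ue ec ec' m (next c m).
  rewrite /cycle_has_edge mc mem_next mc eqxx /= => /esym /andP [mc' _].
  case/or3P: (mem' m mc') => // h.
  - by exfalso; move/negP: n21; apply; rewrite -(anc_antisym h g1).
  - by exfalso; move/negP: n12; apply; apply: anc_trans g1 h.
case/set0Pn: An0 => a aA.
have [ma [ha1 ha2 ha3 hamin]] := getm a aA.
case: (boolP [forall (b | b \in A), anc ma b]) => [hall|].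
  have nma : u1 != ma.
    by apply/eqP => e; move/negP: n21; apply; rewrite e.
  exfalso; apply: H1m; exists ma; split; first by rewrite /sanc ha1 nma.
  by move=> v vA; apply: (forall_inP hall).
rewrite negb_forall_in => /exists_inP [b bA nb].
have [mb [hb1 hb2 hb3 hbmin]] := getm b bA.
have [ca [sca eca mca memca]] :=
  build_cycle n12 n21 zmax' ha1 ha2 hamin ps1 us1 ls1 ps2 us2 ls2.
have [cb [scb ecb mcb memcb]] :=
  build_cycle n12 n21 zmax' hb1 hb2 hbmin ps1 us1 ls1 ps2 us2 ls2.
have h1 := cross _ _ _ _ sca scb eca ecb mca ha1 ha2 memcb.
have h2 := cross _ _ _ _ scb sca ecb eca mcb hb1 hb2 memca.
have e := anc_antisym h1 h2.
by exfalso; move/negP: nb; apply; rewrite e.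
Qed.

End Aux.


Theorem lemma4 (V : finType) (E : rel V) :
  cactus_network E ->
  forall A : {set V}, A != set0 -> exists! u : V, is_lca E A u.
Proof.
move=> [acyc [r [Hr Hru]] cact] A An0.
have reach := root_reach acyc Hr (fun r' h => esym (Hru r' h)).
have Pr : [forall (v | v \in A), anc E r v] by apply/forall_inP => v _; exact: reach.
have [u [Pu umax]] := @exists_max V E acyc (fun x => [forall (v | v \in A), anc E x v]) r Pr.
have Hu : is_lca E A u.
  split; first by move=> v vA; apply: (forall_inP Pu).
  move=> [u' [/andP [h ne] hc]].
  have Pu' : [forall (v | v \in A), anc E u' v] by apply/forall_inP => v vA; exact: hc.
  by move: ne; rewrite (umax u' Pu' h) eqxx.
exists u; split => // u' Hu'.
exact: (lca_uniq acyc reach cact An0 Hu Hu').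
Qed.
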